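(* Let $(R,\mathfrak m)$ be either a Noetherian local ring of prime characteristic $p>0$, or a Noetherian $\mathbb N$-graded ring of characteristic $p$ with $R_0$ a field and $\mathfrak m$ its homogeneous maximal ideal. Let $I$ be an ideal of $R$ (homogeneous in the graded case) with $\dim(R/I)=1$. If there is a positive integer $c$ with $\mathfrak m^{cq}\,(I^{[q]})^{\mathrm{sat}}\subseteq I^{[q]}$ for all powers $q$ of $p$, then there is a positive integer $b$ with \[\mathfrak m^{bq}\cap(I^{[q]})^{\mathrm{sat}}=\mathfrak m^{bq}\cap I^{[q]}\] for all powers $q$ of $p$.
   Context: $I^{[q]}$ is the ideal generated by $\{x^q:x\in I\}$. For an ideal $\mathfrak b$, $\mathfrak b^{\mathrm{sat}}=(\mathfrak b:\mathfrak m^\infty)=\bigcup_{n\ge1}(\mathfrak b:\mathfrak m^n)$. *)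

(* Defs.v *)
From HB Require Import structures.
From mathcomp Require Import all_boot all_order all_algebra.
Set Implicit Arguments. Unset Strict Implicit. Unset Printing Implicit Defensive.
Import GRing.Theory.
Local Open Scope ring_scope.

Section IdealDefs.
Variable R : comNzRingType.

Definition subP (A B : R -> Prop) : Prop := forall x, A x -> B x.

Definition is_ideal (I : R -> Prop) : Prop :=
  [/\ I 0, (forall x y, I x -> I y -> I (x + y)) & (forall r x, I x -> I (r * x))].

Definition ideal_gen (S : R -> Prop) : R -> Prop :=
  fun x => forall J, is_ideal J -> subP S J -> J x.

Definition unit_ideal : R -> Prop := fun _ => True.

Definition ideal_mul (I J : R -> Prop) : R -> Prop :=
  ideal_gen (fun z => exists a b, [/\ I a, J b & z = a * b]).

Fixpoint ideal_pow (I : R -> Prop) (n : nat) : R -> Prop :=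
  match n with
  | O => unit_ideal
  | S k => ideal_mul (ideal_pow I k) I
  end.

Definition frob_pow (I : R -> Prop) (q : nat) : R -> Prop :=
  ideal_gen (fun z => exists x, I x /\ z = x ^+ q).

Definition colon (b J : R -> Prop) : R -> Prop :=
  fun x => forall y, J y -> b (x * y).

Definition saturation (b m : R -> Prop) : R -> Prop :=
  fun x => exists n, (1 <= n)%N /\ colon b (ideal_pow m n) x.

Definition is_prime_ideal (P : R -> Prop) : Prop :=
  [/\ is_ideal P, ~ P 1 & forall x y, P (x * y) -> P x \/ P y].

Definition is_maximal_ideal (M : R -> Prop) : Prop :=
  [/\ is_ideal M, ~ M 1 &
      forall J, is_ideal J -> subP M J -> (forall x, J x <-> M x) \/ J 1].

Definition noetherian : Prop :=
  forall I, is_ideal I -> exists s : seq R,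
      forall x, I x <-> ideal_gen (fun z => z \in s) x.

Definition local_ring_with (m : R -> Prop) : Prop :=
  is_maximal_ideal m /\
  forall M, is_maximal_ideal M -> forall x, M x <-> m x.

Definition strict_sub (A B : R -> Prop) : Prop :=
  subP A B /\ exists x, B x /\ ~ A x.

(* dim(R/I) = 1 : the primes of R/I are the primes of R containing I;
   there is a chain of length 1 and none of length 2. *)
Definition dim_quotient_eq1 (I : R -> Prop) : Prop :=
  (exists P0 P1, [/\ is_prime_ideal P0, is_prime_ideal P1, subP I P0
                    & strict_sub P0 P1]) /\
  ~ (exists P0 P1 P2, [/\ is_prime_ideal P0, is_prime_ideal P1, is_prime_ideal P2,
                         subP I P0 & strict_sub P0 P1 /\ strict_sub P1 P2]).

(* An N-grading R = (+)_n R_n given by the projections comp n : R -> R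
   onto the homogeneous components. *)
Definition is_N_grading (comp : nat -> R -> R) : Prop :=
  [/\ (forall n x y, comp n (x + y) = comp n x + comp n y),
      (forall n k x, comp n (comp k x) = if n == k then comp k x else 0),
      (forall x, exists N, (forall n, (N <= n)%N -> comp n x = 0) /\
                          x = \sum_(n < N) comp n x),
      (forall i j x y, comp (i + j) (comp i x * comp j y) = comp i x * comp j y)
    & comp 0 1 = 1].

Definition degree0_field (comp : nat -> R -> R) : Prop :=
  forall x, comp 0 x = x -> x != 0 -> exists y, comp 0 y = y /\ x * y = 1.

Definition homogeneous_ideal (comp : nat -> R -> R) (I : R -> Prop) : Prop :=
  forall x n, I x -> I (comp n x).

End IdealDefs.

(* Main.v *)
Require Import Defs.
From HB Require Import structures.
From mathcomp Require Import all_boot all_order all_algebra.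
From Stdlib Require Import Classical ClassicalEpsilon.
From mathcomp Require Import ring.
Import GRing.Theory.
Local Open Scope ring_scope.
Unset Printing Implicit Defensive.

Section Basic.
Variable R : comNzRingType.
Implicit Types (A B C T S X Y Z : R -> Prop).

Definition isum A B : R -> Prop := fun z => exists a b, [/\ A a, B b & z = a + b].
Definition pid (a : R) : R -> Prop := fun z => exists r, z = a * r.
Definition zid : R -> Prop := fun z => z = 0.

Lemma subPrr A : subP A A. Proof. by []. Qed.
Lemma subP_trans A B C : subP A B -> subP B C -> subP A C.
Proof. by move=> h1 h2 x /h1 /h2. Qed.

Lemma id0 A : is_ideal A -> A 0. Proof. by case. Qed.
Lemma idD A x y : is_ideal A -> A x -> A y -> A (x + y). Proof. by case=> _ h _; apply: h. Qed.
Lemma idMl A r x : is_ideal A -> A x -> A (r * x). Proof. by case=> _ _ h; apply: h. Qed.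
Lemma idMr A r x : is_ideal A -> A x -> A (x * r). Proof. by move=> h hx; rewrite mulrC; apply: idMl. Qed.
Lemma idN A x : is_ideal A -> A x -> A (- x).
Proof. by move=> h hx; rewrite -mulN1r; apply: idMl. Qed.
Lemma idB A x y : is_ideal A -> A x -> A y -> A (x - y).
Proof. by move=> h hx hy; apply: idD => //; apply: idN. Qed.
Lemma idX A x k : is_ideal A -> A x -> A (x ^+ k.+1).
Proof. by move=> h hx; rewrite exprSr; apply: idMl. Qed.
Lemma id_sum A (I : Type) (r : seq I) (P : pred I) (F : I -> R) :
  is_ideal A -> (forall i, P i -> A (F i)) -> A (\sum_(i <- r | P i) F i).
Proof.
move=> h hF; apply: (big_ind A) => //; first exact: id0.
by move=> x y; apply: idD.
Qed.

Lemma gen_ideal S : is_ideal (ideal_gen S).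
Proof.
split.
- by move=> J hJ _; apply: id0.
- by move=> x y hx hy J hJ hS; apply: idD => //; [apply: hx|apply: hy].
- by move=> r x hx J hJ hS; apply: idMl => //; apply: hx.
Qed.
Lemma gen_incl S : subP S (ideal_gen S).
Proof. by move=> x hx J hJ hS; apply: hS. Qed.
Lemma gen_min S T : is_ideal T -> subP S T -> subP (ideal_gen S) T.
Proof. by move=> hT hS x hx; apply: hx. Qed.

Lemma unit_ideal_ideal : is_ideal (@unit_ideal R). Proof. by []. Qed.
Lemma zid_ideal : is_ideal zid.
Proof. split=> [//|x y ->->|r x ->]; by rewrite ?addr0 ?mulr0. Qed.
Lemma pid_ideal a : is_ideal (pid a).
Proof.
split; first by exists 0; rewrite mulr0.
- by move=> x y [r ->] [s ->]; exists (r + s); rewrite mulrDr.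
- by move=> r x [s ->]; exists (r * s); rewrite mulrCA.
Qed.
Lemma pid_self a : pid a a. Proof. by exists 1; rewrite mulr1. Qed.
Lemma pid_min a T : is_ideal T -> T a -> subP (pid a) T.
Proof. by move=> hT ha x [r ->]; apply: idMr. Qed.

Lemma isum_ideal A B : is_ideal A -> is_ideal B -> is_ideal (isum A B).
Proof.
move=> hA hB; split.
- by exists 0, 0; split; rewrite ?addr0 //; apply: id0.
- move=> x y [a [b [ha hb ->]]] [a' [b' [ha' hb' ->]]].
  exists (a + a'), (b + b'); split; [exact: idD|exact: idD|].
  by rewrite addrACA.
- move=> r x [a [b [ha hb ->]]]; exists (r * a), (r * b); split;
    [exact: idMl|exact: idMl|by rewrite mulrDr].
Qed.
Lemma isum_l A B : is_ideal B -> subP A (isum A B).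
Proof. by move=> hB x hx; exists x, 0; split; rewrite ?addr0 //; apply: id0. Qed.
Lemma isum_r A B : is_ideal A -> subP B (isum A B).
Proof. by move=> hA x hx; exists 0, x; split; rewrite ?add0r //; apply: id0. Qed.
Lemma isum_min A B T : is_ideal T -> subP A T -> subP B T -> subP (isum A B) T.
Proof. by move=> hT hA hB x [a [b [ha hb ->]]]; apply: idD => //; [apply: hA|apply: hB]. Qed.
Lemma isum_mono A B A' B' : subP A A' -> subP B B' -> subP (isum A B) (isum A' B').
Proof. by move=> h1 h2 x [a [b [ha hb ->]]]; exists a, b; split; [apply: h1|apply: h2|]. Qed.

Lemma mul_ideal A B : is_ideal (ideal_mul A B). Proof. exact: gen_ideal. Qed.
Lemma mul_in A B a b : A a -> B b -> ideal_mul A B (a * b).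
Proof. by move=> ha hb; apply: gen_incl; exists a, b. Qed.
Lemma mul_min A B T : is_ideal T -> (forall a b, A a -> B b -> T (a * b)) ->
  subP (ideal_mul A B) T.
Proof. by move=> hT h; apply: gen_min => // z [a [b [ha hb ->]]]; apply: h. Qed.
Lemma mul_mono A B A' B' : subP A A' -> subP B B' -> subP (ideal_mul A B) (ideal_mul A' B').
Proof. by move=> h1 h2; apply: mul_min; [exact: mul_ideal|] => a b ha hb; apply: mul_in; auto. Qed.
Lemma mul_subl A B : is_ideal A -> subP (ideal_mul A B) A.
Proof. by move=> hA; apply: mul_min => // a b ha hb; apply: idMr. Qed.
Lemma mul_subr A B : is_ideal B -> subP (ideal_mul A B) B.
Proof. by move=> hB; apply: mul_min => // a b ha hb; apply: idMl. Qed.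

Definition cofac T b : R -> Prop := fun z => T (z * b).
Lemma cofac_ideal T b : is_ideal T -> is_ideal (cofac T b).
Proof.
move=> hT; split; rewrite /cofac.
- by rewrite mul0r; apply: id0.
- by move=> x y hx hy; rewrite mulrDl; apply: idD.
- by move=> r x hx; rewrite -mulrA; apply: idMl.
Qed.

Lemma mulA_sub X Y Z : subP (ideal_mul (ideal_mul X Y) Z) (ideal_mul X (ideal_mul Y Z)).
Proof.
apply: mul_min; first exact: mul_ideal.
move=> u z hu hz.
have := mul_min X Y (cofac (ideal_mul X (ideal_mul Y Z)) z) (cofac_ideal _ _ (mul_ideal _ _)).
apply=> //.
by move=> x y hx hy; rewrite /cofac -mulrA; apply: mul_in => //; apply: mul_in.
Qed.
Lemma mulC_sub X Y : subP (ideal_mul X Y) (ideal_mul Y X).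
Proof. by apply: mul_min; [exact: mul_ideal|] => a b ha hb; rewrite mulrC; apply: mul_in. Qed.
Lemma mul_unit_l A : is_ideal A -> subP A (ideal_mul (@unit_ideal R) A).
Proof. by move=> hA x hx; rewrite -[x]mul1r; apply: mul_in. Qed.
Lemma mul_unit_r A : is_ideal A -> subP A (ideal_mul A (@unit_ideal R)).
Proof. by move=> hA x hx; rewrite -[x]mulr1; apply: mul_in. Qed.

Lemma pow_ideal A n : is_ideal (ideal_pow A n).
Proof. by case: n => [|n] //=; exact: mul_ideal. Qed.
Lemma pow_mono A B n : subP A B -> subP (ideal_pow A n) (ideal_pow B n).
Proof. by move=> h; elim: n => [|n IH] //=; apply: mul_mono. Qed.
Lemma pow_S_sub A n : is_ideal A -> subP (ideal_pow A n.+1) (ideal_pow A n).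
Proof. by move=> hA /=; apply: mul_subl; apply: pow_ideal. Qed.
Lemma pow_le_sub A n n' : is_ideal A -> (n <= n')%N -> subP (ideal_pow A n') (ideal_pow A n).
Proof.
move=> hA /subnK <-; elim: (n' - n)%N => [|k IH] //.
by rewrite addSn; apply: subP_trans IH; apply: pow_S_sub.
Qed.
Lemma pow1_sub A : is_ideal A -> subP (ideal_pow A 1) A.
Proof. by move=> hA; apply: mul_subr. Qed.
Lemma pow1_sup A : is_ideal A -> subP A (ideal_pow A 1).
Proof. by move=> hA; apply: mul_unit_l. Qed.
Lemma elt_pow A a k : A a -> ideal_pow A k (a ^+ k).
Proof. by move=> ha; elim: k => [|k IH] //=; rewrite exprSr; apply: mul_in. Qed.

Lemma pow_add_sub A i j :
  subP (ideal_pow A (i + j)) (ideal_mul (ideal_pow A i) (ideal_pow A j)).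
Proof.
elim: j => [|j IH]; first by rewrite addn0; apply: mul_unit_r; apply: pow_ideal.
rewrite addnS /=; apply: (@subP_trans _ (ideal_mul (ideal_mul (ideal_pow A i) (ideal_pow A j)) A)).
  exact: mul_mono _ _ _ _ IH (subPrr _).
exact: mulA_sub.
Qed.
Lemma pow_mul_sub A a b : subP (ideal_pow A (a * b)) (ideal_pow (ideal_pow A a) b).
Proof.
elim: b => [|b IH]; first by [].
rewrite mulnS addnC.
apply: (@subP_trans _ (ideal_mul (ideal_pow A (a * b)) (ideal_pow A a))).
  exact: pow_add_sub.
exact: mul_mono _ _ _ _ IH (subPrr _).
Qed.

Lemma pid_pow a k : subP (ideal_pow (pid a) k) (pid (a ^+ k)).
Proof.
elim: k => [|k IH] /=; first by move=> x _; exists x; rewrite expr0 mul1r.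
apply: mul_min; first exact: pid_ideal.
move=> u v /IH [r ->] [s ->]; exists (r * s).
by rewrite exprSr mulrACA.
Qed.

Lemma pow_isum A B s t : is_ideal A -> is_ideal B ->
  subP (ideal_pow (isum A B) (s + t)) (isum (ideal_pow A s) (ideal_pow B t)).
Proof.
move=> hA hB.
have hs : forall s t, is_ideal (isum (ideal_pow A s) (ideal_pow B t)).
  by move=> s1 t1; apply: isum_ideal; apply: pow_ideal.
elim: (s + t)%N {-2}s {-2}t (erefl (s + t)%N) => [|n IH] s' t'.
  by move/eqP; rewrite addn_eq0 => /andP[/eqP-> /eqP->] x _; exists x, 0; rewrite addr0.
case: s' => [|s'].
  by move=> _ x _; exists x, 0; split; rewrite ?addr0 //; apply: id0; apply: pow_ideal.
case: t' => [|t'].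
  by move=> _ x _; exists 0, x; split; rewrite ?add0r //; apply: id0; apply: pow_ideal.
move=> e /=; apply: mul_min; first exact: (hs s'.+1 t'.+1).
move=> u v hu [a [b [ha hb ->]]]; rewrite mulrDr.
apply: idD; first exact: (hs s'.+1 t'.+1).
- have e' : (s' + t'.+1)%N = n by move: e; rewrite addSn => -[].
  have [a1 [b1 [ha1 hb1 ->]]] := IH _ _ e' _ hu.
  rewrite mulrDl; apply: idD; first exact: (hs s'.+1 t'.+1).
  + by apply: isum_l; [exact: mul_ideal|]; apply: mul_in.
  + by apply: isum_r; [exact: mul_ideal|]; exact: (idMr (ideal_mul (ideal_pow B t') B) a b1 (mul_ideal _ _) hb1).
- have e' : (s'.+1 + t')%N = n by move: e; rewrite addnS => -[].
  have [a1 [b1 [ha1 hb1 ->]]] := IH _ _ e' _ (eq_ind _ (fun k => ideal_pow (isum A B) k u) hu _ (esym (addSnnS s' t'))).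
  rewrite mulrDl; apply: idD; first exact: (hs s'.+1 t'.+1).
  + by apply: isum_l; [exact: mul_ideal|]; exact: (idMr (ideal_mul (ideal_pow A s') A) b a1 (mul_ideal _ _) ha1).
  + by apply: isum_r; [exact: mul_ideal|]; apply: mul_in.
Qed.

Definition gens (s : seq R) := ideal_gen (fun z => z \in s).

Lemma gens_cons a s : subP (gens (a :: s)) (isum (pid a) (gens s)).
Proof.
apply: gen_min; first exact: isum_ideal (pid_ideal a) (gen_ideal _).
move=> z; rewrite inE => /orP[/eqP->|hz].
  by apply: isum_l; [exact: gen_ideal|exact: pid_self].
by apply: isum_r; [exact: pid_ideal|]; apply: gen_incl.
Qed.
Lemma gens_nil : subP (gens [::]) zid.
Proof. by apply: gen_min; [exact: zid_ideal|]. Qed.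
Lemma gens_mem s a : a \in s -> gens s a.
Proof. by move=> h; apply: gen_incl. Qed.

Lemma gens_pow s T q : is_ideal T -> (forall a, a \in s -> T (a ^+ q)) ->
  subP (ideal_pow (gens s) (size s * q + 1)) T.
Proof.
move=> hT; elim: s => [|a s IH] hs /=.
  move=> x /(mul_subr _ _ (gen_ideal _)) /gens_nil ->; exact: id0.
rewrite mulSn -addnA.
apply: (@subP_trans _ (ideal_pow (isum (pid a) (gens s)) (q + (size s * q + 1)))).
  exact: pow_mono (gens_cons a s).
apply: subP_trans (pow_isum _ _ _ _ (pid_ideal _) (gen_ideal _)) _.
apply: isum_min => //.
  apply: subP_trans (pid_pow a q) _; apply: pid_min => //; apply: hs; exact: mem_head.
by apply: IH => b hb; apply: hs; rewrite inE hb orbT.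
Qed.

Lemma gens_sub_cons a s : subP (gens s) (gens (a :: s)).
Proof. by apply: gen_min; [exact: gen_ideal|] => z hz; apply: gens_mem; rewrite inE hz orbT. Qed.

Lemma frob_ideal (I : R -> Prop) q : is_ideal (frob_pow I q). Proof. exact: gen_ideal. Qed.

Lemma core (m I : R -> Prop) (s : seq R) (x : R) n c q :
  is_ideal m -> is_ideal I -> (forall z, I z <-> gens s z) -> m x ->
  subP (ideal_pow m n) (isum I (pid x)) -> (0 < q)%N ->
  subP (ideal_mul (ideal_pow m (c * q)) (saturation (frob_pow I q) m)) (frob_pow I q) ->
  forall y, ideal_pow m ((n.+1 * c.+1 * (size s).+2) * q) y ->
     saturation (frob_pow I q) m y -> frob_pow I q y.
Proof.
move=> hm hI hIs hx hK hq hc.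
set J := frob_pow I q.
have hJ : is_ideal J by exact: frob_ideal.
set Kc := isum I (pid (x ^+ c)).
set G := gens (x ^+ c :: s).
set T := isum J (pid (x ^+ (c * q))).
have hT : is_ideal T by apply: isum_ideal => //; exact: pid_ideal.
have h1 : subP (ideal_pow m (n.+1 * c.+1)) Kc.
  apply: (@subP_trans _ (ideal_pow (ideal_pow m n.+1) c.+1)); first exact: pow_mul_sub.
  apply: (@subP_trans _ (ideal_pow (isum I (pid x)) (1 + c))).
    apply: pow_mono; apply: subP_trans hK; exact: pow_S_sub.
  apply: subP_trans (pow_isum _ _ 1 c hI (pid_ideal x)) _.
  apply: isum_mono; [exact: pow1_sub|exact: pid_pow].
have h2 : subP Kc G.
  apply: isum_min; first exact: gen_ideal.
    by move=> z /hIs; apply: gens_sub_cons.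
  by apply: pid_min; [exact: gen_ideal|apply: gens_mem; exact: mem_head].
have h3 : subP (ideal_pow G ((size s).+1 * q + 1)) T.
  have := gens_pow (x ^+ c :: s) T q hT; apply.
  move=> a; rewrite inE => /orP[/eqP->|ha].
    by apply: isum_r => //; rewrite -exprM; exact: pid_self.
  apply: isum_l; first exact: pid_ideal.
  by apply: gen_incl; exists a; split => //; apply/hIs; apply: gen_incl.
have h4 : subP (ideal_pow m ((n.+1 * c.+1 * (size s).+2) * q)) T.
  rewrite -mulnA.
  apply: (@subP_trans _ (ideal_pow (ideal_pow m (n.+1 * c.+1)) ((size s).+2 * q))).
    exact: pow_mul_sub.
  apply: (@subP_trans _ (ideal_pow G ((size s).+2 * q))).
    by apply: pow_mono; apply: subP_trans h2.
  apply: subP_trans h3; apply: pow_le_sub; first exact: gen_ideal.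
  by rewrite [X in (_ <= X)%N]mulSn [X in (_ <= X)%N]addnC leq_add2l.
move=> y /h4 [j [v [hj [r ->] ->]]] [N1 [hN1 hy]].
have hr : saturation J m r.
  exists (N1 + (n.+1 * c.+1 * (size s).+2) * q)%N; split; first exact: leq_trans hN1 (leq_addr _ _).
  move=> z /pow_add_sub hz.
  have : cofac J r z.
    apply: (mul_min _ _ (cofac J r) (cofac_ideal _ _ hJ)) hz.
    move=> u w hu /h4 [j' [w' [hj' [t ->] ->]]]; rewrite /cofac.
    have -> : u * (j' + x ^+ (c * q) * t) * r = (u * r) * j' + ((j + x ^+ (c * q) * r) * u - j * u) * t.
      by ring.
    apply: (idD J) => //; first exact: (idMl J (u * r) j' hJ hj').
    apply: (idMr J) => //; apply: (idB J) => //; [exact: hy|exact: (idMr J u j hJ hj)].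
  by rewrite /cofac mulrC.
apply: (idD J) => //; apply: hc; apply: mul_in => //; exact: elt_pow.
Qed.

Hypothesis hN : noetherian R.

Lemma noeth_max (F : (R -> Prop) -> Prop) :
  (forall K, F K -> is_ideal K) -> (exists K, F K) ->
  exists M, F M /\ forall K, F K -> subP M K -> subP K M.
Proof.
move=> hF [K0 hK0]; apply: NNPP => H.
have step : forall M, F M -> exists K, F K /\ subP M K /\ ~ subP K M.
  move=> M hM; apply: NNPP => H2; apply: H; exists M; split => // K hK hMK.
  by apply: NNPP => H3; apply: H2; exists K.
pose T := {M : R -> Prop | F M}.
pose f (M : T) : T := let e := constructive_indefinite_description _ (step _ (proj2_sig M)) in
   exist _ (proj1_sig e) (proj1 (proj2_sig e)).
have hf : forall M : T, subP (proj1_sig M) (proj1_sig (f M)) /\ ~ subP (proj1_sig (f M)) (proj1_sig M).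
  by move=> M; rewrite /f; case: (constructive_indefinite_description _ _) => K [? []].
pose ch k := proj1_sig (iter k f (exist _ K0 hK0)).
have mono : forall k d, subP (ch k) (ch (k + d)%N).
  move=> k; elim=> [|d IH]; first by rewrite addn0.
  by rewrite addnS; apply: subP_trans IH _; exact: (proj1 (hf _)).
have chI : forall k, is_ideal (ch k) by move=> k; apply: hF; exact: proj2_sig.
pose U z := exists k, ch k z.
have hU : is_ideal U.
  split.
  - by exists 0%N; apply: id0.
  - move=> x y [i hi] [j hj]; exists (i + j)%N; apply: idD; first exact: chI.
      exact: mono.
    by rewrite addnC; exact: mono.
  - by move=> r x [i hi]; exists i; apply: idMl.
have [s hs] := hN U hU.
have [N hNs] : exists N, forall z, z \in s -> ch N z.
  have : forall z, z \in s -> U z by move=> z hz; apply/hs; apply: gens_mem.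
  elim: s {hs} => [|a s IH0] hsU; first by exists 0%N.
  have [N IH] := IH0 (fun z hz => hsU z (@mem_behead _ (a :: s) z hz)).
  have [k hk] : U a by apply: hsU; exact: mem_head.
  exists (N + k)%N => z; rewrite inE => /orP[/eqP->|hz].
    by rewrite addnC; exact: mono.
  exact/mono/IH.
have : subP (ch N.+1) (ch N).
  move=> z hz; have /hs : U z by exists N.+1.
  by apply: gen_min => //; exact: chI.
by apply: (proj2 (hf (iter N f (exist _ K0 hK0)))).
Qed.

Lemma avoid_max (Adm : (R -> Prop) -> Prop) (K : R -> Prop) (y : R) :
  is_ideal K -> Adm K -> (forall k, ~ K (y ^+ k)) ->
  exists Q, [/\ is_ideal Q, Adm Q, subP K Q, (forall k, ~ Q (y ^+ k)) &
     forall a b, Adm (isum Q (pid a)) -> Adm (isum Q (pid b)) -> Q (a * b) -> Q a \/ Q b].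
Proof.
move=> hK hAK hy.
pose F J := [/\ is_ideal J, Adm J, subP K J & forall k, ~ J (y ^+ k)].
have [Q [[hQ hAQ hKQ hyQ] hmax]] : exists M, F M /\ forall J, F J -> subP M J -> subP J M.
  apply: noeth_max; first by move=> J [].
  by exists K; split.
exists Q; split => // a b ha hb hab; apply: NNPP => /not_or_and [na nb].
have ext : forall c, Adm (isum Q (pid c)) -> ~ Q c -> exists i, isum Q (pid c) (y ^+ i).
  move=> c hc nc; apply: NNPP => H; apply: nc.
  have hF : F (isum Q (pid c)).
    split => //.
    - by apply: isum_ideal => //; exact: pid_ideal.
    - by apply: subP_trans hKQ _; apply: isum_l; exact: pid_ideal.
    - by move=> k hk; apply: H; exists k.
  apply: (hmax _ hF); first by apply: isum_l; exact: pid_ideal.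
  by apply: isum_r => //; exact: pid_self.
have [i [q1 [z1 [hq1 [r1 ->] e1]]]] := ext a ha na.
have [j [q2 [z2 [hq2 [r2 ->] e2]]]] := ext b hb nb.
apply: (hyQ (i + j)%N); rewrite exprD e1 e2.
have -> : (q1 + a * r1) * (q2 + b * r2) = q1 * (q2 + b * r2) + q2 * (a * r1) + (a * b) * (r1 * r2).
  by ring.
by apply: idD => //; [apply: idD => //; apply: idMr|apply: idMr].
Qed.

Lemma primes_cover (I : R -> Prop) : is_ideal I ->
  exists Ps : list (R -> Prop),
    (forall P, List.In P Ps -> is_prime_ideal P /\ subP I P) /\
    forall Q, is_prime_ideal Q -> subP I Q -> exists P, List.In P Ps /\ subP P Q.
Proof.
move=> hI.
pose Pr K := exists Ps : list (R -> Prop),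
    (forall P, List.In P Ps -> is_prime_ideal P /\ subP K P) /\
    forall Q, is_prime_ideal Q -> subP K Q -> exists P, List.In P Ps /\ subP P Q.
apply: NNPP => nI.
have [K [[hK nK] hmax]] : exists M, (is_ideal M /\ ~ Pr M) /\
    forall J, (is_ideal J /\ ~ Pr J) -> subP M J -> subP J M.
  apply: noeth_max; first by move=> J [].
  by exists I.
apply: nK.
have [K1|nK1] := classic (K 1).
  exists nil; split => // Q [hQ nQ _] hKQ; exfalso; exact/nQ/hKQ.
have [pK|npK] := classic (forall a b, K (a * b) -> K a \/ K b).
  exists [:: K]; split; first by move=> P [<-|//]; split.
  by move=> Q hQ hKQ; exists K; split => //; left.
have [a [b [hab /not_or_and [na nb]]]] : exists a b, K (a * b) /\ ~ (K a \/ K b).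
  apply: NNPP => H; apply: npK => a b hab; apply: NNPP => H2; apply: H; by exists a, b.
have ext : forall c, ~ K c -> Pr (isum K (pid c)).
  move=> c nc; apply: NNPP => H; apply: nc.
  apply: (hmax (isum K (pid c))).
  - by split => //; apply: isum_ideal => //; exact: pid_ideal.
  - by apply: isum_l; exact: pid_ideal.
  - by apply: isum_r => //; exact: pid_self.
have [La [hLa1 hLa2]] := ext a na.
have [Lb [hLb1 hLb2]] := ext b nb.
exists (La ++ Lb)%list; split.
  move=> P hP0; case: (List.in_app_or _ _ _ hP0) => [/hLa1|/hLb1] [hP hs]; split => //;
    (apply: (subP_trans _ _ _ _ hs); apply: isum_l; exact: pid_ideal).
move=> Q hQ hKQ; case: (hQ) => [hQi _ pQ].
have [Qa|Qb] := pQ _ _ (hKQ _ hab).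
  have [P [hP hPQ]] := hLa2 Q hQ (isum_min _ _ _ hQi hKQ (pid_min _ _ hQi Qa)).
  by exists P; split => //; apply: List.in_or_app; left.
have [P [hP hPQ]] := hLb2 Q hQ (isum_min _ _ _ hQi hKQ (pid_min _ _ hQi Qb)).
by exists P; split => //; apply: List.in_or_app; right.
Qed.

Section Avoid.
Variables (A : R -> Prop) (Fam : (R -> Prop) -> Prop) (G Hz : R -> Prop).
Hypothesis hA : is_ideal A.
Hypothesis hFam : forall P, Fam P -> is_prime_ideal P.
Hypothesis g0 : exists x, G x /\ A x.
Hypothesis gA : forall P, Fam P -> ~ subP A P -> exists a, [/\ G a, A a & ~ P a].
Hypothesis gz : forall P P', Fam P -> Fam P' -> ~ subP P' P -> exists z, [/\ Hz z, P' z & ~ P z].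
Hypothesis gmul : forall a z, G a -> Hz z -> G (a * z).
Hypothesis gcomb : forall x w, G x -> G w -> A x -> A w -> exists y, [/\ G y, A y,
   (forall P, is_prime_ideal P -> P x -> ~ P w -> ~ P y) &
   (forall P, is_prime_ideal P -> ~ P x -> P w -> ~ P y)].

Lemma avoid_prod P (L : list (R -> Prop)) : Fam P -> ~ subP A P ->
  (forall P', List.In P' L -> Fam P' /\ ~ subP P' P) ->
  exists w, [/\ G w, A w, ~ P w & forall P', List.In P' L -> P' w].
Proof.
move=> hP nAP; elim: L => [|P1 L IH] hL.
  by have [a [ga aa na]] := gA P hP nAP; exists a; split.
have [w [gw aw nw hw]] := IH (fun P' h => hL P' (or_intror h)).
have [hP1 n1] := hL P1 (or_introl erefl).
have [z [hz z1 nz]] := gz P P1 hP hP1 n1.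
have [[hPi _ pP] [hP1i _ _]] := (hFam P hP, hFam P1 hP1).
exists (w * z); split.
- exact: gmul.
- exact: idMr.
- by move/pP => [].
- move=> P' [<-|hP']; first exact: idMl.
  by apply: idMr; [case: (hFam P' (proj1 (hL P' (or_intror hP'))))|exact: hw].
Qed.

Lemma avoidance (L : list (R -> Prop)) : (forall P, List.In P L -> Fam P) ->
  exists x, [/\ G x, A x & forall P, List.In P L -> ~ subP A P -> ~ P x].
Proof.
move: {2}(List.length L) (leqnn (List.length L)) => n.
elim: n L => [|n IH] [|P L'] //= hlen hL.
- by have [x [gx ax]] := g0; exists x; split.
- by have [x [gx ax]] := g0; exists x; split.
have [x [gx ax hx]] := IH L' hlen (fun P' h => hL P' (or_intror h)).
have hP := hL P (or_introl erefl).
have [AP|nAP] := classic (subP A P).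
  by exists x; split => // Q [<-|hQ] //; apply: hx.
have [nPx|Px] := classic (~ P x).
  by exists x; split => // Q [<-|hQ] //; apply: hx.
have [[P' [inP' sP']]|noP] := classic (exists P', List.In P' L' /\ subP P' P).
  have [L1 [L2 e]] := List.in_split _ _ inP'.
  have hlen' : (List.length (P :: L1 ++ L2) <= n)%N.
    move: hlen; rewrite e /= !List.length_app /=.
    by rewrite !plusE addnS.
  have [x' [gx' ax' hx']] : exists x', [/\ G x', A x' &
      forall Q, List.In Q (P :: L1 ++ L2) -> ~ subP A Q -> ~ Q x'].
    apply: IH => // Q [<-|hQ] //; apply: hL; right; rewrite e.
    by case: (List.in_app_or _ _ _ hQ) => h; apply: List.in_or_app; [left|right; right].
  exists x'; split => // Q [<-|hQ]; first by apply: hx'; left.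
  rewrite e in hQ; case: (List.in_app_or _ _ _ hQ) => [h|[<-|h]].
  - by apply: hx'; right; apply: List.in_or_app; left.
  - by move=> _ /sP'; apply: hx' nAP; left.
  - by apply: hx'; right; apply: List.in_or_app; right.
have [w [gw aw nw hw]] : exists w, [/\ G w, A w, ~ P w & forall P', List.In P' L' -> P' w].
  apply: avoid_prod => // P' hP'; split; first by apply: hL; right.
  by move=> h; apply: noP; exists P'.
have [y [gy ay h1 h2]] := gcomb x w gx gw ax aw.
exists y; split => // Q [<-|hQ] nAQ.
  by apply: h1 => //; [exact: hFam|exact: NNPP Px].
apply: h2; first by apply: hFam; apply: hL; right.
  exact: hx.
exact: hw.
Qed.
End Avoid.

Lemma rad_pow (m K : R -> Prop) : is_ideal m -> is_ideal K ->
  (forall y, m y -> exists k, K (y ^+ k)) -> exists n, subP (ideal_pow m n) K.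
Proof.
move=> hm hK hrad.
have [s hs] := hN m hm.
have [k hk] : exists k, forall z, z \in s -> K (z ^+ k).
  have : forall z, z \in s -> m z by move=> z hz; apply/hs; apply: gens_mem.
  elim: s {hs} => [|a s IH0] hsm; first by exists 0%N.
  have [k IH] := IH0 (fun z hz => hsm z (@mem_behead _ (a :: s) z hz)).
  have [i hi] := hrad a (hsm a (mem_head _ _)).
  exists (k + i)%N => z; rewrite inE => /orP[/eqP->|hz].
    by rewrite exprD; apply: idMl.
  by rewrite exprD; apply: idMr => //; apply: IH.
exists (size s * k + 1)%N.
apply: (@subP_trans _ (ideal_pow (gens s) (size s * k + 1))).
  by apply: pow_mono => z /hs.
exact: gens_pow.
Qed.

Lemma max_prime (M : R -> Prop) : is_maximal_ideal M -> is_prime_ideal M.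
Proof.
case=> hM nM hmax; split => // a b hab.
apply: NNPP => /not_or_and [na nb]; apply: nb.
have hJ : is_ideal (isum M (pid a)) by apply: isum_ideal => //; exact: pid_ideal.
case: (hmax _ hJ (isum_l _ _ (pid_ideal a))) => [h|].
  by exfalso; apply: na; apply/h; apply: isum_r => //; exact: pid_self.
move=> [u [v [hu [r ->] e]]].
have -> : b = (u + a * r) * b by rewrite -e mul1r.
rewrite mulrDl; apply: idD => //; first exact: idMr.
by rewrite mulrAC; apply: idMr.
Qed.

Lemma proper_in_max (K : R -> Prop) : is_ideal K -> ~ K 1 ->
  exists M, is_maximal_ideal M /\ subP K M.
Proof.
move=> hK nK.
have [M [[hM nM hKM] hmax]] : exists M, [/\ is_ideal M, ~ M 1 & subP K M] /\
   forall J, [/\ is_ideal J, ~ J 1 & subP K J] -> subP M J -> subP J M.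
  apply: noeth_max; first by move=> J [].
  by exists K; split.
exists M; split => //; split => // J hJ hMJ.
have [J1|nJ1] := classic (J 1); first by right.
left => z; split; last exact: hMJ.
by apply: hmax => //; split => //; apply: subP_trans hMJ.
Qed.

Lemma local_param (m I : R -> Prop) : local_ring_with m -> is_ideal I -> dim_quotient_eq1 I ->
  is_ideal m /\ exists x n, m x /\ subP (ideal_pow m n) (isum I (pid x)).
Proof.
move=> [hmM huniq] hI [_ nochain].
have hm : is_ideal m by case: hmM.
have pm := max_prime _ hmM.
have inm : forall Q, is_ideal Q -> ~ Q 1 -> subP Q m.
  move=> Q hQ nQ z hz; have [M [hM hQM]] := proper_in_max _ hQ nQ.
  by apply/(huniq M hM); apply: hQM.
split => //.
have [Ps [hPs1 hPs2]] := primes_cover _ hI.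
have [x [_ xm hx]] : exists x, [/\ True, m x & forall P, List.In P Ps -> ~ subP m P -> ~ P x].
  apply: (avoidance m (@is_prime_ideal R) (fun _ => True) (fun _ => True)) => //.
  - by exists 0; split => //; apply: id0.
  - move=> P _ nP; apply: NNPP => H; apply: nP => z hz; apply: NNPP => nz.
    by apply: H; exists z.
  - move=> P P' _ _ nP; apply: NNPP => H; apply: nP => z hz; apply: NNPP => nz.
    by apply: H; exists z.
  - move=> a b _ _ xa wb; exists (a + b); split => //; first exact: idD.
      move=> P [hP _ _] Pa nPb Pab; apply: nPb.
      by have := idB _ _ _ hP Pab Pa; rewrite addrAC subrr add0r.
    move=> P [hP _ _] nPa Pb Pab; apply: nPa.
    by have := idB _ _ _ hP Pab Pb; rewrite addrK.
  - by move=> P /hPs1 [].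
exists x.
set K := isum I (pid x).
have hK : is_ideal K by apply: isum_ideal => //; exact: pid_ideal.
have [n hn] : exists n, subP (ideal_pow m n) K.
  apply: rad_pow => // y ym; apply: NNPP => H.
  have ny : forall k, ~ K (y ^+ k) by move=> k hk; apply: H; exists k.
  have [Q [hQ _ hKQ hyQ hpQ]] := avoid_max (fun _ => True) K y hK Logic.I ny.
  have pQ : is_prime_ideal Q.
    split => //; first by move=> h; apply: (hyQ 0%N); rewrite expr0.
    by move=> a b; apply: hpQ.
  have IQ : subP I Q by apply: subP_trans hKQ; apply: isum_l; exact: pid_ideal.
  have [P [inP sPQ]] := hPs2 Q pQ IQ.
  have [mP|nmP] := classic (subP m P).
    by apply: (hyQ 1%N); rewrite expr1; apply: sPQ; apply: mP.
  apply: nochain; exists P, Q, m; split => //; first exact: (proj1 (hPs1 P inP)).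
    exact: (proj2 (hPs1 P inP)).
  split; split.
  - exact: sPQ.
  - exists x; split; last exact: hx.
    by apply: hKQ; apply: isum_r => //; exact: pid_self.
  - apply: inm => //; by move=> h; apply: (hyQ 0%N); rewrite expr0.
  - by exists y; split => // hQy; apply: (hyQ 1%N); rewrite expr1.
by exists n; split.
Qed.

Section Graded.
Variable comp : nat -> R -> R.
Hypothesis hg : is_N_grading comp.
Hypothesis hfld : degree0_field comp.

Lemma cD n x y : comp n (x + y) = comp n x + comp n y.
Proof. by case: hg. Qed.
Lemma cc n k x : comp n (comp k x) = if n == k then comp k x else 0.
Proof. by case: hg. Qed.
Lemma cdec x : exists N, (forall n, (N <= n)%N -> comp n x = 0) /\ x = \sum_(n < N) comp n x.
Proof. by case: hg. Qed.
Lemma cmul i j x y : comp (i + j) (comp i x * comp j y) = comp i x * comp j y.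
Proof. by case: hg. Qed.
Lemma c01 : comp 0 1 = 1.
Proof. by case: hg. Qed.
Lemma c0 n : comp n 0 = 0.
Proof. by apply: (addIr (comp n 0)); rewrite -cD !addr0 add0r. Qed.
Lemma cN n x : comp n (- x) = - comp n x.
Proof. by apply: (addrI (comp n x)); rewrite -cD !subrr c0. Qed.
Lemma csum n (I0 : Type) (r : seq I0) (P : pred I0) (F : I0 -> R) :
  comp n (\sum_(i <- r | P i) F i) = \sum_(i <- r | P i) comp n (F i).
Proof. exact: (big_morph (comp n) (cD n) (c0 n)). Qed.

Definition hom d z := comp d z = z.
Lemma hom_comp n x : hom n (comp n x). Proof. by rewrite /hom cc eqxx. Qed.
Lemma comp_hom d z n : hom d z -> comp n z = if n == d then z else 0.
Proof. by rewrite /hom => <-; rewrite cc. Qed.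
Lemma hom_mul d e a b : hom d a -> hom e b -> hom (d + e) (a * b).
Proof. by rewrite /hom => ha hb; rewrite -{1}ha -{1}hb cmul ha hb. Qed.
Lemma hom_exp d a k : hom d a -> hom (k * d) (a ^+ k).
Proof.
move=> ha; elim: k => [|k IH]; first by rewrite /hom expr0 c01.
by rewrite exprS mulSn; apply: hom_mul.
Qed.
Lemma hom_add d a b : hom d a -> hom d b -> hom d (a + b).
Proof. by rewrite /hom cD => -> ->. Qed.
Lemma hom0 d : hom d 0. Proof. exact: c0. Qed.

Lemma cdecN x N0 N : (forall n, (N0 <= n)%N -> comp n x = 0) -> x = \sum_(n < N0) comp n x ->
  (N0 <= N)%N -> x = \sum_(n < N) comp n x.
Proof.
move=> hz ex le; rewrite -(subnKC le) big_split_ord /=.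
rewrite [X in _ + X]big1 ?addr0 //.
by move=> i _; apply: hz; exact: leq_addr.
Qed.

Lemma cprod x y : exists N, [/\ forall n, (N <= n)%N -> comp n x = 0,
    forall n, (N <= n)%N -> comp n y = 0 &
    forall n, comp n (x * y) =
      \sum_(k < N) \sum_(l < N) (if n == (k + l)%N then comp k x * comp l y else 0)].
Proof.
have [Nx [zx ex]] := cdec x; have [Ny [zy ey]] := cdec y.
set N := maxn Nx Ny.
have zx' : forall n, (N <= n)%N -> comp n x = 0.
  by move=> n hn; apply: zx; apply: leq_trans hn; exact: leq_maxl.
have zy' : forall n, (N <= n)%N -> comp n y = 0.
  by move=> n hn; apply: zy; apply: leq_trans hn; exact: leq_maxr.
have ex' := cdecN x Nx N zx ex (leq_maxl Nx Ny).
have ey' := cdecN y Ny N zy ey (leq_maxr Nx Ny).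
exists N; split => // n.
have -> : x * y = \sum_(k < N) \sum_(l < N) comp k x * comp l y.
  rewrite {1}ex' {1}ey' big_distrl; apply: eq_bigr => k _; exact: big_distrr.
rewrite csum; apply: eq_bigr => k _; rewrite csum; apply: eq_bigr => l _.
by rewrite -cmul cc; case: eqP => // ->; rewrite cmul.
Qed.

Definition mG : R -> Prop := fun x => comp 0 x = 0.

Lemma mG_ideal : is_ideal mG.
Proof.
split; rewrite /mG.
- exact: c0.
- by move=> x y hx hy; rewrite cD hx hy addr0.
- move=> r x hx; have [N [_ zx ->]] := cprod r x.
  apply: big1 => k _; apply: big1 => l _; case: eqP => // /esym /eqP.
  by rewrite addn_eq0 => /andP [_ /eqP ->]; rewrite hx mulr0.
Qed.

Lemma c0mul a b : comp 0 (a * b) = comp 0 a * comp 0 b.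
Proof.
have ha : mG (a - comp 0 a) by rewrite /mG cD cN cc eqxx subrr.
have hb : mG (b - comp 0 b) by rewrite /mG cD cN cc eqxx subrr.
have -> : a * b = comp 0 a * comp 0 b + (comp 0 a * (b - comp 0 b) + (a - comp 0 a) * b).
  by ring.
rewrite cD (cmul 0 0) [X in _ + X](_ : _ = 0) ?addr0 //.
apply: idD mG_ideal _ _; [apply: idMl mG_ideal _|apply: idMr mG_ideal _] => //.
Qed.

Lemma mG_prime : is_prime_ideal mG.
Proof.
split; first exact: mG_ideal.
  by rewrite /mG c01; apply/eqP; exact: oner_neq0.
move=> a b; rewrite /mG c0mul => hab.
have [a0|a0] := eqVneq (comp 0 a) 0; first by left.
right; have [z [hz ez]] := hfld (comp 0 a) (hom_comp 0 a) a0.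
by rewrite -[comp 0 b]mul1r -ez mulrAC hab mul0r.
Qed.

Lemma not_comp (P : R -> Prop) z : is_ideal P -> ~ P z -> exists n, ~ P (comp n z).
Proof.
move=> hP nz; apply: NNPP => H; apply: nz.
have [N [_ ->]] := cdec z; apply: id_sum => // n _.
by apply: NNPP => h; apply: H; exists n.
Qed.

Lemma proper_hom_in_m (Q : R -> Prop) : is_ideal Q -> homogeneous_ideal comp Q -> ~ Q 1 ->
  subP Q mG.
Proof.
move=> hQ hh nQ q hq; rewrite /mG; apply: NNPP => /eqP nz.
have [z [_ ez]] := hfld (comp 0 q) (hom_comp 0 q) nz.
by apply: nQ; rewrite -ez; apply: idMr => //; apply: hh.
Qed.

Lemma hom_isum (J : R -> Prop) a d : is_ideal J -> homogeneous_ideal comp J -> hom d a ->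
  homogeneous_ideal comp (isum J (pid a)).
Proof.
move=> hJ hh ha z n [j [v [hj [r ->] ->]]].
exists (comp n j), (comp n (a * r)); split => //; last by rewrite cD.
  exact: hh.
have [N [_ _ ->]] := cprod a r.
apply: id_sum; first exact: pid_ideal.
move=> k _; apply: id_sum; first exact: pid_ideal.
move=> l _; case: ifP => _; last by apply: id0; exact: pid_ideal.
rewrite (comp_hom d a k ha); case: ifP => _; first by exists (comp l r).
by rewrite mul0r; apply: id0; exact: pid_ideal.
Qed.

Definition star (P : R -> Prop) : R -> Prop := fun x => forall n, P (comp n x).

Lemma star_sub P : is_ideal P -> subP (star P) P.
Proof. by move=> hP x hx; have [N [_ ->]] := cdec x; apply: id_sum. Qed.

Lemma star_ideal P : is_ideal P -> is_ideal (star P).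
Proof.
move=> hP; split; rewrite /star.
- by move=> n; rewrite c0; apply: id0.
- by move=> x y hx hy n; rewrite cD; apply: idD.
- move=> r x hx n; have [N [_ _ ->]] := cprod r x.
  apply: id_sum => // k _; apply: id_sum => // l _; case: ifP => _; first exact: idMl.
  exact: id0.
Qed.

Lemma star_hom P : is_ideal P -> homogeneous_ideal comp (star P) .
Proof. by move=> hP x n hx k; rewrite cc; case: eqP => _; [apply: hx|apply: id0]. Qed.

Lemma pick_max (P : R -> Prop) x : is_ideal P -> ~ P x ->
  exists i N, [/\ ~ P (comp i x), (i < N)%N, (forall n, (N <= n)%N -> comp n x = 0) &
     forall k, (i < k)%N -> P (comp k x)].
Proof.
move=> hP nx.
have [N [zN _]] := cdec x.
pose pa k := if excluded_middle_informative (P (comp k x)) then false else true.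
have pa_spec : forall k, pa k <-> ~ P (comp k x).
  by move=> k; rewrite /pa; case: excluded_middle_informative.
have exa : exists k, pa k by have [k hk] := not_comp _ _ hP nx; exists k; apply/pa_spec.
have bnd : forall k, pa k -> (k <= N)%N.
  move=> k /pa_spec hk; apply: ltnW; rewrite ltnNge; apply/negP => hNk.
  by apply: hk; rewrite zN //; apply: id0.
case: (ex_maxnP exa bnd) => i /pa_spec pai maxi.
exists i, N; split => //.
- rewrite ltnNge; apply/negP => hNk; by apply: pai; rewrite zN //; apply: id0.
- move=> k ik; apply: NNPP => nk.
  by have := maxi k (proj2 (pa_spec k) nk); rewrite leqNgt ik.
Qed.

Lemma homprime (Q : R -> Prop) : is_ideal Q -> homogeneous_ideal comp Q -> ~ Q 1 ->
  (forall a b i j, hom i a -> hom j b -> Q (a * b) -> Q a \/ Q b) -> is_prime_ideal Q.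
Proof.
move=> hQ hh nQ hp; split => // a b hab.
apply: NNPP => /not_or_and [na nb].
have [i [Na [pai iNa zNa maxi]]] := pick_max _ _ hQ na.
have [j [Nb [pbj jNb zNb maxj]]] := pick_max _ _ hQ nb.
have [N [za zb e]] := cprod a b.
have iN : (i < N)%N.
  rewrite ltnNge; apply/negP => hNk; by apply: pai; rewrite za //; apply: id0.
have jN : (j < N)%N.
  rewrite ltnNge; apply/negP => hNk; by apply: pbj; rewrite zb //; apply: id0.
have hij := hh (a * b) (i + j)%N hab; rewrite e in hij.
rewrite (bigD1 (Ordinal iN)) //= (bigD1 (Ordinal jN)) //= eqxx in hij.
have r1 : Q (\sum_(l < N | l != Ordinal jN)
     (if (i + j == i + l)%N then comp i a * comp l b else 0)).
  apply: id_sum => // l hl; case: eqP => [e2|_]; last exact: id0.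
  move: hl => /negP; case; apply/eqP/val_inj => /=.
  by apply/eqP; rewrite -(eqn_add2l i) -e2.
have r2 : Q (\sum_(k < N | k != Ordinal iN) \sum_(l < N)
     (if (i + j == k + l)%N then comp k a * comp l b else 0)).
  apply: id_sum => // k hk; apply: id_sum => // l _; case: eqP => [e2|_]; last exact: id0.
  have ki : (k : nat) != i by apply: contra hk => /eqP ki; apply/eqP/val_inj.
  case: (ltngtP i k) => [ik|ki'|ike]; last by rewrite ike eqxx in ki.
    by apply: idMr => //; apply: maxi.
  apply: idMl => //; apply: maxj.
  by rewrite -(ltn_add2l i) e2 ltn_add2r.
have : Q (comp i a * comp j b).
  have := idB _ _ _ hQ (idB _ _ _ hQ hij r2) r1.
  by rewrite addrK addrK.
case/(hp _ _ i j (hom_comp i a) (hom_comp j b)) => //.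
Qed.

Lemma prime_pow_not (P : R -> Prop) w k : is_prime_ideal P -> ~ P w -> ~ P (w ^+ k).
Proof.
case=> hP nP pP nw; elim: k => [|k IH]; first by rewrite expr0.
by rewrite exprS => /pP [].
Qed.

Lemma graded_param (I : R -> Prop) : homogeneous_ideal comp I -> is_ideal I ->
  dim_quotient_eq1 I ->
  exists x n, mG x /\ subP (ideal_pow mG n) (isum I (pid x)).
Proof.
move=> hIh hI [_ nochain].
have [Ps [hPs1 hPs2]] := primes_cover _ hI.
have starP : forall P, List.In P Ps -> is_prime_ideal (star P).
  move=> P /hPs1 [[hP nP pP] _]; apply: homprime.
  - exact: star_ideal.
  - exact: star_hom.
  - by move/(star_sub _ hP).
  move=> a b i j ha hb /(star_sub _ hP) /pP [h|h]; [left|right] => n.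
    by rewrite (comp_hom i a n ha); case: ifP => _ //; apply: id0.
  by rewrite (comp_hom j b n hb); case: ifP => _ //; apply: id0.
pose Fam P := is_prime_ideal P /\ homogeneous_ideal comp P.
have [x [[d [d0 xd]] xm hx]] : exists x, [/\ (exists d, (0 < d)%N /\ hom d x), mG x &
     forall P, List.In P (List.map star Ps) -> ~ subP mG P -> ~ P x].
  apply: (avoidance mG Fam (fun x => exists d, (0 < d)%N /\ hom d x)
            (fun z => exists e, hom e z)).
  - exact: mG_ideal.
  - by move=> P [].
  - by exists 0; split; [exists 1%N; split => //; exact: hom0|apply: id0; exact: mG_ideal].
  - move=> P [[hP _ _] hPh] nP.
    have [z [zm nz]] : exists z, mG z /\ ~ P z.
      by apply: NNPP => H; apply: nP => z hz; apply: NNPP => nz; apply: H; exists z.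
    have [n nn] := not_comp _ _ hP nz.
    have n0 : n != 0%N by apply: contra_notN nn => /eqP ->; rewrite zm; apply: id0.
    exists (comp n z); split => //.
      by exists n; split; [rewrite lt0n|exact: hom_comp].
    by rewrite /mG cc eq_sym (negbTE n0).
  - move=> P P' [[hP _ _] _] [_ hP'h] nP.
    have [z [zm nz]] : exists z, P' z /\ ~ P z.
      by apply: NNPP => H; apply: nP => z hz; apply: NNPP => nz; apply: H; exists z.
    have [n nn] := not_comp _ _ hP nz.
    by exists (comp n z); split => //; [exists n; exact: hom_comp|apply: hP'h].
  - move=> a z [dd [dd0 ha]] [e he]; exists (dd + e)%N; split.
      by rewrite addn_gt0 dd0.
    exact: hom_mul.
  - move=> a w [da [da0 ha]] [dw [dw0 hw]] am wm.
    exists (a ^+ dw + w ^+ da); split.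
    + exists (dw * da)%N; split; first by rewrite muln_gt0 da0 dw0.
      apply: hom_add; first exact: hom_exp.
      by rewrite mulnC; apply: hom_exp.
    + case: dw dw0 {hw} => // dw _; case: da da0 {ha} => // da _.
      by apply: idD; [exact: mG_ideal|apply: idX mG_ideal _|apply: idX mG_ideal _].
    + move=> P pP Pa nPw Ps'; case: (pP) => [hP _ _].
      apply: (prime_pow_not _ w da pP nPw).
      have := idB _ _ _ hP Ps' (idX _ _ (dw.-1) hP Pa).
      by rewrite prednK // addrAC subrr add0r.
    + move=> P pP nPa Pw Ps'; case: (pP) => [hP _ _].
      apply: (prime_pow_not _ a dw pP nPa).
      have := idB _ _ _ hP Ps' (idX _ _ (da.-1) hP Pw).
      by rewrite prednK // addrK.
  - move=> P /List.in_map_iff [P0 [<- inP0]]; split; first exact: starP.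
    by apply: star_hom; case: (hPs1 P0 inP0) => [[]].
exists x.
set K := isum I (pid x).
have hK : is_ideal K by apply: isum_ideal => //; exact: pid_ideal.
have hKh : homogeneous_ideal comp K by exact: hom_isum xd.
have [n hn] : exists n, subP (ideal_pow mG n) K.
  apply: rad_pow => //; first exact: mG_ideal.
  move=> y ym; apply: NNPP => H.
  have ny : forall k, ~ K (y ^+ k) by move=> k hk; apply: H; exists k.
  have [Q [hQ hQh hKQ hyQ hpQ]] := avoid_max (homogeneous_ideal comp) K y hK hKh ny.
  have nQ1 : ~ Q 1 by move=> h; apply: (hyQ 0%N); rewrite expr0.
  have pQ : is_prime_ideal Q.
    apply: homprime => // a b i j ha hb; apply: hpQ.
      exact: hom_isum ha.
    exact: hom_isum hb.
  have IQ : subP I Q by apply: subP_trans hKQ; apply: isum_l; exact: pid_ideal.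
  have [P [inP sPQ]] := hPs2 Q pQ IQ.
  have [[hP _ _] IP] := hPs1 P inP.
  have inS : List.In (star P) (List.map star Ps) by apply: List.in_map.
  have [mP|nmP] := classic (subP mG (star P)).
    by apply: (hyQ 1%N); rewrite expr1; apply: sPQ; apply: (star_sub _ hP); apply: mP.
  apply: nochain; exists (star P), Q, mG; split => //.
  - exact: starP.
  - exact: mG_prime.
  - by move=> z hz k; apply: IP; apply: hIh.
  split; split.
  - by apply: subP_trans sPQ; apply: star_sub.
  - exists x; split; last exact: hx.
    by apply: hKQ; apply: isum_r => //; exact: pid_self.
  - exact: proper_hom_in_m.
  - by exists y; split => // hQy; apply: (hyQ 1%N); rewrite expr1.
by exists n; split.
Qed.

End Graded.
End Basic.

Theorem mainTheorem16 (R : comNzRingType) (p : nat) (m I : R -> Prop) :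
  p \in [pchar R] ->
  noetherian R ->
  (local_ring_with m \/
   exists comp : nat -> R -> R,
     [/\ is_N_grading comp, degree0_field comp,
         (forall x, m x <-> comp 0%N x = 0) & homogeneous_ideal comp I]) ->
  is_ideal I ->
  dim_quotient_eq1 I ->
  (exists c : nat, (0 < c)%N /\
     forall e : nat,
       subP (ideal_mul (ideal_pow m (c * p ^ e)%N)
                          (saturation (frob_pow I (p ^ e)%N) m))
               (frob_pow I (p ^ e)%N)) ->
  exists b : nat, (0 < b)%N /\
    forall (e : nat) (x : R),
      (ideal_pow m (b * p ^ e)%N x /\ saturation (frob_pow I (p ^ e)%N) m x) <->
      (ideal_pow m (b * p ^ e)%N x /\ frob_pow I (p ^ e)%N x).
Proof.
move=> hp hN hcase hI hdim [c [c0 hc]].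
have [hm [x [n [xm hn]]]] : is_ideal m /\ exists x n, m x /\ subP (ideal_pow m n) (isum R I (pid R x)).
  case: hcase => [hloc|[comp [hg hf hmc hIh]]]; first exact: local_param.
  have [x [n [xm hn]]] := graded_param R hN comp hg hf I hIh hI hdim.
  have e1 : subP m (mG R comp) by move=> z /hmc.
  have e2 : subP (mG R comp) m by move=> z /hmc.
  split.
    have hG := mG_ideal R comp hg.
    split; [apply: e2; exact: id0|move=> a b /e1 ha /e1 hb; apply: e2; exact: idD|].
    by move=> r a /e1 ha; apply: e2; exact: idMl.
  exists x, n; split; first exact: e2.
  exact: subP_trans (pow_mono R _ _ n e1) hn.
have [s hs] := hN I hI.
have p0 : (0 < p)%N by apply: prime_gt0; exact: pcharf_prime hp.
exists (n.+1 * c.+1 * (size s).+2)%N; split; first by rewrite !muln_gt0.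
move=> e y; split; case=> hy1 hy2; split => //.
  have q0 : (0 < p ^ e)%N by rewrite expn_gt0 p0.
  exact: (core R m I s x n c (p ^ e) hm hI hs xm hn q0 (hc e)).
exists 1%N; split => // z _; exact: (idMr R _ z y (frob_ideal R I (p ^ e)) hy2).
Qed.
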